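(* Let $G=(V,E)$ be a graph with $n$ vertices, $m$ edges, maximum degree $\Delta$ and arboricity $\alpha$. Procedure Arboricity Edge-Coloring with parameter $h\le\log\alpha$ computes a proper $(\Delta+3\cdot2^h)$-edge-coloring of $G$ in $O\left(\frac{m\alpha^7\log n}{2^{7h}}\right)$ deterministic time. Its randomized version requires $O\left(\frac{m\alpha\log n}{2^h}\right)$ expected time.
   Context: Logarithms are base 2. The arboricity of $G$ is $\max_{S\subseteq V,|S|\ge2}\lceil |E(G[S])|/(|S|-1)\rceil$. A proper $k$-edge-coloring is a map $\varphi:E\to\{1,\dots,k\}$ with distinct colors on distinct edges sharing an endpoint. An oriented degree-splitting of $(H,\mu)$ with discrepancy $\kappa$ is a partition $(E_1,E_2)$ of $E(H)$ such that for every vertex $v$, the numbers of incoming edges of $v$ in $E_1$ and in $E_2$ differ by at most $\kappa$, and likewise for outgoing edges. Procedure Forests-Decomposition Orientation$(G)$: starting from $\mathcal A=V$, repeatedly pick $v\in\mathcal A$ of minimum degree in $G[\mathcal A]$, orient every edge from $v$ to its neighbours in $\mathcal A$, and remove $v$ from $\mathcal A$, until $\mathcal A=\emptyset$. Procedure Oriented Edge-Coloring$(H,\mu,h)$: if $h=0$, return a proper $(\Delta(H)+1)$-edge-coloring of $H$ computed by a base-case subroutine; otherwise compute in $O(|E(H)|)$ time an oriented degree-splitting $(E_1,E_2)$ of $(H,\mu)$ with discrepancy at most 1, let $H_1=(V,E_1)$, $H_2=(V,E_2)$ with orientation induced by $\mu$, compute $\varphi_1=$ Oriented Edge-Coloring$(H_1,\mu,h-1)$,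 $\varphi_2=$ Oriented Edge-Coloring$(H_2,\mu,h-1)$, and return $\varphi=\varphi_1$ on $E_1$ and $\varphi=p_1+\varphi_2$ on $E_2$, where $p_1$ is the palette size of $\varphi_1$. Procedure Arboricity Edge-Coloring$(G,h)$: compute $\mu=$ Forests-Decomposition Orientation$(G)$ and return Oriented Edge-Coloring$(G,\mu,h)$. Deterministic version: the base-case subroutine is a deterministic algorithm computing a proper $(\Delta'+1)$-edge-coloring of an $n'$-vertex $m'$-edge graph with maximum degree $\Delta'$ and arboricity $\alpha'$ in $O(m'\alpha'^7\log n')$ time. Randomized version: the base-case subroutine is a randomized algorithm computing a proper $(\Delta'+1)$-edge-coloring in expected $O(m'\alpha'\log n')$ time. *)

(* Defs.v *)
From mathcomp Require Import all_boot all_order all_algebra.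
Set Implicit Arguments. Unset Strict Implicit. Unset Printing Implicit Defensive.
Import Order.TTheory GRing.Theory Num.Theory.

(* A simple graph on a finite vertex type V is given by its edge set
   E : {set {set V}}, every edge being a 2-element set of vertices. *)
Section Graphs.
Variable V : finType.
Implicit Types (E H : {set {set V}}) (S A : {set V}).

Definition simple_graph E : Prop := forall e, e \in E -> #|e| = 2.

Definition deg E (v : V) : nat := #|[set e in E | v \in e]|.
Definition maxdeg E : nat := \max_(v : V) deg E v.

Definition nedges_in E S : nat := #|[set e in E | e \subset S]|.

Definition ceil_div (a b : nat) : nat := (a + b.-1) %/ b.

Definition arboricity E : nat :=
  \max_(S : {set V} | 2 <= #|S|) ceil_div (nedges_in E S) (#|S| - 1).

Definition proper_edge_coloring E (k : nat) (phi : {set V} -> nat) : Prop :=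
  (forall e, e \in E -> 1 <= phi e <= k) /\
  (forall e f, e \in E -> f \in E -> e != f -> e :&: f != set0 ->
     phi e != phi f).

(* An orientation: mu e v means v is the tail of edge e. *)
Definition orientation := {set V} -> V -> bool.

Definition outdeg (mu : orientation) E (v : V) : nat :=
  #|[set e in E | (v \in e) && mu e v]|.
Definition indeg (mu : orientation) E (v : V) : nat :=
  #|[set e in E | (v \in e) && ~~ mu e v]|.

Definition oriented_splitting (mu : orientation) H (E1 : {set {set V}})
    (kappa : nat) : Prop :=
  E1 \subset H /\
  forall v : V,
    (indeg mu E1 v <= indeg mu (H :\: E1) v + kappa) /\
    (indeg mu (H :\: E1) v <= indeg mu E1 v + kappa) /\
    (outdeg mu E1 v <= outdeg mu (H :\: E1) v + kappa) /\
    (outdeg mu (H :\: E1) v <= outdeg mu E1 v + kappa).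

(* Forests-Decomposition Orientation: a run is described by the sequence s
   of removed vertices; at step i, s_i has minimum degree in G[A] where A is
   the set of not yet removed vertices. *)
Definition fdo_run E (s : seq V) : Prop :=
  uniq s /\ size s = #|V| /\
  forall i, i < size s -> forall x0 : V,
    let A := [set x in drop i s] in
    forall u, u \in A -> deg [set e in E | e \subset A] (nth x0 s i)
                          <= deg [set e in E | e \subset A] u.

Definition fdo_orientation (s : seq V) : orientation :=
  fun e v => (v \in e) && [forall u in e, index v s <= index u s].

(* Returns the coloring and its palette size. *)
Fixpoint oriented_edge_coloring
    (split : orientation -> {set {set V}} -> {set {set V}})
    (base : {set {set V}} -> {set V} -> nat)
    (mu : orientation) (h : nat) H : ({set V} -> nat) * nat :=
  match h with
  | 0 => (base H, maxdeg H + 1)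
  | h'.+1 =>
      let E1 := split mu H in
      let E2 := H :\: E1 in
      let r1 := oriented_edge_coloring split base mu h' E1 in
      let r2 := oriented_edge_coloring split base mu h' E2 in
      (fun e => if e \in E1 then r1.1 e else r1.2 + r2.1 e, r1.2 + r2.2)
  end.

Fixpoint oriented_edge_coloring_cost (R : Type) (add : R -> R -> R)
    (split : orientation -> {set {set V}} -> {set {set V}})
    (costS : orientation -> {set {set V}} -> R)
    (costB : {set {set V}} -> R)
    (mu : orientation) (h : nat) H : R :=
  match h with
  | 0 => costB H
  | h'.+1 =>
      let E1 := split mu H in
      add (costS mu H)
        (add (oriented_edge_coloring_cost add split costS costB mu h' E1)
             (oriented_edge_coloring_cost add split costS costB mu h'
                (H :\: E1)))
  end.

Definition arboricity_edge_coloring split base (s : seq V) (h : nat) E :=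
  (oriented_edge_coloring split base (fdo_orientation s) h E).1.

End Graphs.

(* Main.v *)
Require Import Defs.
From mathcomp Require Import all_boot all_order all_algebra.
Import Order.TTheory GRing.Theory Num.Theory.
From mathcomp Require Import zify ring lra.
Set Implicit Arguments. Unset Strict Implicit. Unset Printing Implicit Defensive.
Lemma card_sum (T : finType) (A : {set T}) (Q : pred T) :
  #|[set e in A | Q e]| = \sum_(e in A) Q e.
Proof.
rewrite -sum1_card big_mkcond [RHS]big_mkcond; apply: eq_bigr => e _.
by rewrite inE; case: (e \in A); case: (Q e).
Qed.

Lemma card_cover (T U : finType) (A : {set T}) (S : {set U}) (P : U -> T -> bool) :
  (forall e, e \in A -> exists v, v \in S /\ P v e) ->
  #|A| <= \sum_(v in S) #|[set e in A | P v e]|.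
Proof.
move=> hc.
under eq_bigr => v _ do rewrite card_sum.
rewrite exchange_big /= -sum1_card; apply: leq_sum => e eA.
have [v [vS Pv]] := hc e eA.
by rewrite (bigD1 v) //= Pv.
Qed.

Section G.
Variable V : finType.
Implicit Types (E H L F : {set {set V}}) (S A : {set V}) (mu : orientation V).

Lemma card_split_pred (P : pred {set V}) H E1 : E1 \subset H ->
  #|[set e in H | P e]| = #|[set e in E1 | P e]| + #|[set e in H :\: E1 | P e]|.
Proof.
move=> sub; rewrite -(cardsID E1 [set e in H | P e]); congr (_ + _);
  apply: eq_card => e; rewrite !inE; move: (subsetP sub e);
  by case: (e \in E1); case: (e \in H); case: (P e) => // ->.
Qed.

Lemma deg_in_out mu E v : deg E v = indeg mu E v + outdeg mu E v.
Proof.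
rewrite /deg /indeg /outdeg -(cardsID [set e | mu e v] [set e in E | v \in e]) addnC.
by congr (_ + _); apply: eq_card => e; rewrite !inE; case: (e \in E); case: (v \in e); case: (mu e v).
Qed.

Lemma deg_mono H E v : H \subset E -> deg H v <= deg E v.
Proof.
move=> sub; apply: subset_leq_card; apply/subsetP => e; rewrite !inE => /andP [eH ve].
by rewrite (subsetP sub _ eH) ve.
Qed.

Lemma leq_maxdeg E v : deg E v <= maxdeg E.
Proof. rewrite /maxdeg; apply: (@leq_bigmax V (deg E)). Qed.

Lemma maxdeg_le E k : (forall v, deg E v <= k) -> maxdeg E <= k.
Proof. by move=> h; apply/bigmax_leqP => v _. Qed.

Lemma arb_bound mu L K :
  (forall e, e \in L -> exists v, v \in e /\ mu e v) ->
  (forall v, outdeg mu L v <= K) -> arboricity L <= 2 * K.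
Proof.
move=> ht hK; apply/bigmax_leqP => S S2.
have hn : nedges_in L S <= #|S| * K.
  have hc : forall e, e \in [set e in L | e \subset S] -> exists v, v \in S /\ (v \in e) && mu e v.
    move=> e; rewrite inE => /andP [eL eS]; have [v [ve mv]] := ht e eL.
    by exists v; rewrite ve mv (subsetP eS v ve).
  apply: leq_trans (card_cover hc) _.
  rewrite -sum_nat_const; apply: leq_sum => v _.
  apply: leq_trans (hK v); apply: subset_leq_card; apply/subsetP => e.
  by rewrite !inE => /andP [/andP [-> _] ->].
rewrite /ceil_div -ltnS ltn_divLR; last lia.
nia.
Qed.

Lemma handshake F : simple_graph F -> \sum_v deg F v = 2 * #|F|.
Proof.
move=> sg.
under eq_bigr => v _ do rewrite /deg card_sum.
rewrite exchange_big /= -sum1_card big_distrr /=; apply: eq_bigr => e eF.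
rewrite muln1 -(sg e eF) -sum1_card [RHS]big_mkcond /=.
by apply: eq_bigr => u _; case: (u \in e).
Qed.

Lemma arb_le_n E : simple_graph E -> arboricity E <= #|V|.
Proof.
move=> sg; apply/bigmax_leqP => S S2.
have hn : nedges_in E S <= 'C(#|S|, 2).
  rewrite -cards_draws; apply: subset_leq_card; apply/subsetP => e.
  by rewrite !inE => /andP [eE ->]; rewrite sg.
rewrite bin2 in hn.
apply: (@leq_trans #|S|); last by apply: max_card.
rewrite /ceil_div -ltnS ltn_divLR; last lia.
move: hn S2; set k := #|S|; set a := nedges_in E S => hn S2.
have : a <= k * (k - 1) by lia.
move: S2; clear; move=> S2 h.
have -> : k.+1 * (k - 1) = k * (k - 1) + (k - 1) by rewrite mulSn addnC.
lia.
Qed.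

Lemma arb_n2 E : 0 < arboricity E -> 2 <= #|V|.
Proof.
apply: contraLR; rewrite -!leqNgt leqn0 => hV.
rewrite -leqn0; apply/bigmax_leqP => S S2.
have : #|S| <= #|V| by apply: max_card. lia.
Qed.

Lemma fdo_tail (s : seq V) (e : {set V}) : e != set0 -> exists v, v \in e /\ fdo_orientation s e v.
Proof.
case/set0Pn => v0 v0e.
case: (arg_minnP (fun v => index v s) v0e) => v ve hmin.
have ve2 : v \in e := ve. exists v; split => //; rewrite /fdo_orientation ve2 /=.
by apply/forall_inP => u ue; exact: hmin.
Qed.

Lemma fdo_outdeg E (s : seq V) : simple_graph E -> fdo_run E s ->
  forall v, outdeg (fdo_orientation s) E v <= 2 * arboricity E.
Proof.
move=> sg [us [ss hmin]] v.
have alls : forall u, u \in s.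
  have hc : #|mem s| = #|predT : pred V|.
    by rewrite (card_uniqP us) ss cardT.
  move=> u; have /(subset_cardP hc) eqs : (mem s) \subset (predT : pred V) by apply/subsetP.
  by have := eqs u; rewrite !inE.
set i := index v s.
have ilt : i < size s by rewrite index_mem.
set A := [set x in drop i s].
have vA : v \in A.
  by rewrite inE (drop_nth v ilt) nth_index // mem_head.
have inA : forall u, i <= index u s -> u \in A.
  move=> u hu; rewrite inE -(nth_index u (alls u)).
  have -> : index u s = i + (index u s - i) by lia.
  rewrite -nth_drop; apply: mem_nth; rewrite size_drop.
  have := index_mem u s; rewrite alls; lia.
set F := [set e in E | e \subset A].
have sgF : simple_graph F by move=> e; rewrite inE => /andP [/sg].
have step1 : outdeg (fdo_orientation s) E v <= deg F v.
  apply: subset_leq_card; apply/subsetP => e; rewrite !inE.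
  move=> /andP [eE /andP [ve /andP [_ /forall_inP hu]]].
  rewrite eE ve andbT /=; apply/subsetP => u ue; exact: inA (hu u ue).
have step2 : forall u, u \in A -> deg F v <= deg F u.
  by move=> u uA; have := hmin i ilt v u uA; rewrite nth_index.
have step3 : #|A| * deg F v <= 2 * #|F|.
  rewrite -handshake // -sum_nat_const.
  apply: (@leq_trans (\sum_(u in A) deg F u)); first exact: leq_sum.
  by rewrite [X in _ <= X](bigID (mem A)) /= leq_addr.
apply: leq_trans step1 _.
have A1 : 0 < #|A| by apply/card_gt0P; exists v.
case: (leqP #|A| 1) => hA.
  have F0 : #|F| = 0.
    case: (set_0Vmem F) => [-> | [e eF]]; first by rewrite cards0.
    move: eF; rewrite inE => /andP [eE /subset_leq_card]; rewrite sg //; lia.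
  rewrite F0 in step3; nia.
have hq : ceil_div (nedges_in E A) (#|A| - 1) <= arboricity E.
  rewrite /arboricity; exact: (@leq_bigmax_cond _ (fun S : {set V} => 2 <= #|S|) (fun S : {set V} => ceil_div (nedges_in E S) (#|S| - 1)) A hA).
have hc := @ltn_ceil (nedges_in E A + (#|A| - 1).-1) (#|A| - 1).
rewrite /ceil_div in hq; rewrite /nedges_in -/F in hq hc.
have : #|F| <= arboricity E * (#|A| - 1).
  have := hc ltac:(lia). nia.
nia.
Qed.

End G.

Section Leaves.
Variable V : finType.
Variable split : orientation V -> {set {set V}} -> {set {set V}}.
Variable base : {set {set V}} -> {set V} -> nat.
Variable mu : orientation V.
Implicit Types (H L : {set {set V}}) (h : nat).

Fixpoint leaves (h : nat) (H : {set {set V}}) : seq {set {set V}} :=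
  match h with
  | 0 => [:: H]
  | h'.+1 => leaves h' (split mu H) ++ leaves h' (H :\: split mu H)
  end.

Lemma size_leaves h H : size (leaves h H) = 2 ^ h.
Proof. elim: h H => [|h IH] H //=; rewrite size_cat !IH expnS; lia. Qed.

Lemma palette_leaves h H :
  (oriented_edge_coloring split base mu h H).2 = \sum_(L <- leaves h H) (maxdeg L + 1).
Proof.
elim: h H => [|h IH] H /=; first by rewrite big_seq1.
by rewrite big_cat /= !IH.
Qed.

Lemma cost_leaves (R : nzRingType) (costS : orientation V -> {set {set V}} -> R)
   (costB : {set {set V}} -> R) h H :
  oriented_edge_coloring_cost +%R split costS costB mu h H =
  (oriented_edge_coloring_cost +%R split costS (fun _ => 0%R) mu h H +
    \sum_(L <- leaves h H) costB L)%R.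
Proof.
elim: h H => [|h IH] H /=; first by rewrite big_seq1 add0r.
rewrite big_cat /= !IH.
set a := oriented_edge_coloring_cost _ _ _ _ _ _ _.
set b := oriented_edge_coloring_cost _ _ _ _ _ _ _.
set c := (\sum_(_ <- leaves h _) _)%R; set d := (\sum_(_ <- leaves h _) _)%R.
by rewrite -[RHS]addrA (addrACA a b c d).
Qed.

Variable E : {set {set V}}.
Hypothesis splitsub : forall H : {set {set V}}, H \subset E -> split mu H \subset H.

Lemma leaves_sub h H : H \subset E -> forall L, L \in leaves h H -> L \subset H.
Proof.
elim: h H => [|h IH] H HE L /=; first by rewrite inE => /eqP ->.
have s1 := splitsub HE.
rewrite mem_cat => /orP [] /IH H1.
- apply: subset_trans (s1); apply: H1; exact: subset_trans s1 HE.
- apply: subset_trans (subsetDl H (split mu H)); apply: H1.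
  exact: subset_trans (subsetDl _ _) HE.
Qed.

Lemma sum_card_leaves h H : H \subset E -> \sum_(L <- leaves h H) #|L| = #|H|.
Proof.
elim: h H => [|h IH] H HE /=; first by rewrite big_seq1.
have s1 := splitsub HE.
have s2 : H :\: split mu H \subset E by exact: subset_trans (subsetDl _ _) HE.
have s3 : split mu H \subset E by exact: subset_trans s1 HE.
rewrite big_cat /= !IH //.
by rewrite -(cardsID (split mu H) H) (setIidPr s1).
Qed.


Lemma leaves_gen (f : {set {set V}} -> nat) :
  (forall H, H \subset E -> [/\ f H = f (split mu H) + f (H :\: split mu H),
      f (split mu H) <= f (H :\: split mu H) + 1 &
      f (H :\: split mu H) <= f (split mu H) + 1]) ->
  forall h H, H \subset E -> forall L, L \in leaves h H -> 2 ^ h * f L + 1 <= f H + 2 ^ h.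
Proof.
move=> hf; elim=> [|h IH] H HE L /=; first by rewrite inE => /eqP ->; lia.
have s1 := splitsub HE.
have s2 : H :\: split mu H \subset E by exact: subset_trans (subsetDl _ _) HE.
have s3 : split mu H \subset E by exact: subset_trans s1 HE.
have [e1 e2 e3] := hf H HE.
rewrite mem_cat => /orP [] /IH; [move=> /(_ s3)|move=> /(_ s2)]; rewrite expnS; lia.
Qed.

Hypothesis baseok : forall H, H \subset E ->
  proper_edge_coloring H (maxdeg H + 1) (base H).

Lemma color_ok h H : H \subset E ->
  proper_edge_coloring H (oriented_edge_coloring split base mu h H).2
     (oriented_edge_coloring split base mu h H).1.
Proof.
elim: h H => [|h IH] H HE /=; first exact: baseok.
have s1 := splitsub HE.
have s2 : H :\: split mu H \subset E by exact: subset_trans (subsetDl _ _) HE.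
have s3 : split mu H \subset E by exact: subset_trans s1 HE.
have [c1 p1] := IH _ s3; have [c2 p2] := IH _ s2.
split.
- move=> e eH; case: ifP => e1.
    have := c1 e e1; lia.
  have e2 : e \in H :\: split mu H by rewrite inE e1 eH.
  have := c2 e e2; lia.
- move=> e f eH fH nef inter.
  have mem2 : forall x, x \in H -> x \notin split mu H -> x \in H :\: split mu H.
    by move=> x xH xn; rewrite inE xn xH.
  case: ifP => e1; case: ifP => f1.
  + exact: p1.
  + have := c1 e e1; have := c2 f (mem2 f fH (negbT f1)).
    move=> /andP [a1 _] /andP [_ a2]; apply/eqP; lia.
  + have := c1 f f1; have := c2 e (mem2 e eH (negbT e1)).
    move=> /andP [a1 _] /andP [_ a2]; apply/eqP; lia.
  + have := p2 e f (mem2 e eH (negbT e1)) (mem2 f fH (negbT f1)) nef inter.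
    apply: contra => /eqP h1; apply/eqP; lia.
Qed.

Lemma splitcost (R : realFieldType) (costS : orientation V -> {set {set V}} -> R) (a : R) :
  (0 <= a)%R ->
  (forall H, H \subset E -> costS mu H <= a * (#|H|.+1)%:R)%R ->
  forall h H, H \subset E ->
  (oriented_edge_coloring_cost +%R split costS (fun _ => 0%R) mu h H + a
     <= a * (h * #|H| + 2 ^ h.+1)%:R)%R.
Proof.
move=> a0 hc; elim=> [|h IH] H HE /=.
  rewrite mul0n add0n expn1 add0r; lra.
have s1 := splitsub HE.
have s2 : H :\: split mu H \subset E by exact: subset_trans (subsetDl _ _) HE.
have s3 : split mu H \subset E by exact: subset_trans s1 HE.
have i1 := IH _ s3; have i2 := IH _ s2; have i3 := hc _ HE.
have ecard : #|H| = #|split mu H| + #|H :\: split mu H|.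
  by rewrite -(cardsID (split mu H) H) (setIidPr s1).
have : (h.+1 * #|H| + 2 ^ h.+2 + 1 = #|H|.+1 + (h * #|split mu H| + 2 ^ h.+1)
   + (h * #|H :\: split mu H| + 2 ^ h.+1))%N.
  rewrite ecard !expnS; lia.
move/(congr1 (fun x => a * x%:R)%R); rewrite !natrD !mulrDr mulr1 => eq.
lra.
Qed.

End Leaves.
Lemma arb_le_m (V : finType) (E : {set {set V}}) : arboricity E <= #|E|.
Proof.
apply/bigmax_leqP => S S2.
have hn : nedges_in E S <= #|E|.
  by apply: subset_leq_card; apply/subsetP => e; rewrite inE => /andP [].
apply: (@leq_trans (nedges_in E S)) => //.
rewrite /ceil_div -ltnS ltn_divLR; last lia.
nia.
Qed.

Lemma sum_le_const (T : eqType) (r : seq T) (f : T -> nat) c :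
  (forall x, x \in r -> f x <= c) -> \sum_(x <- r) f x <= size r * c.
Proof.
elim: r => [|x r IH] hf; first by rewrite big_nil.
rewrite big_cons /= mulSn; apply: leq_add; first by apply: hf; rewrite mem_head.
by apply: IH => y yr; apply: hf; rewrite inE yr orbT.
Qed.

Lemma sum_const_seq (T : Type) (r : seq T) c : \sum_(x <- r) c = size r * c.
Proof. elim: r => [|x r IH]; first by rewrite big_nil. by rewrite big_cons IH /= mulSn. Qed.

Lemma helperR (R : realFieldType) (x c : R) (a b k : nat) :
  (x <= c * a%:R)%R -> (a * b <= k)%N -> (x * b%:R <= `|c| * k%:R)%R.
Proof.
move=> hx hk.
have hb : (0 <= (b%:R : R))%R by rewrite ler0n.
apply: (le_trans (ler_wpM2r hb hx)).
rewrite -mulrA -natrM.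
have : (c <= `|c|)%R by rewrite ler_norm.
move=> hc.
apply: le_trans (ler_wpM2r (ler0n _ _) hc) _.
apply: ler_wpM2l; first exact: normr_ge0.
by rewrite ler_nat.
Qed.

Local Open Scope ring_scope.

Theorem theorem4p15 (R : realFieldType) (cO cS cB cR : R) :
  exists C : R,
  forall (V : finType) (E : {set {set V}}) (h : nat) (s : seq V)
         (split : orientation V -> {set {set V}} -> {set {set V}})
         (base : {set {set V}} -> {set V} -> nat)
         (costO : R)
         (costS : orientation V -> {set {set V}} -> R)
         (costB ecostB : {set {set V}} -> R),
    let n := #|V| in
    let m := #|E| in
    let Delta := maxdeg E in
    let alpha := arboricity E in
    let lg := trunc_log 2 n in
    let mu := fdo_orientation s in
    simple_graph E ->
    (2 ^ h <= alpha)%N ->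
    fdo_run E s ->
    (* degree-splitting subroutine: discrepancy <= 1, time O(|E(H)|) *)
    (forall H : {set {set V}}, H \subset E -> oriented_splitting mu H (split mu H) 1) ->
    (forall H : {set {set V}}, H \subset E -> costS mu H <= cS * (#|H|.+1)%N%:R) ->
    (* base case: proper (Delta(H)+1)-edge-coloring *)
    (forall H : {set {set V}}, H \subset E -> proper_edge_coloring H (maxdeg H + 1) (base H)) ->
    (* Forests-Decomposition Orientation time O(m) *)
    costO <= cO * (m.+1)%N%:R ->
    (* deterministic base case time O(m' alpha'^7 log n') *)
    (forall H : {set {set V}}, H \subset E ->
       costB H <= cB * (#|H| * arboricity H ^ 7 * lg).+1%N%:R) ->
    (* randomized base case expected time O(m' alpha' log n') *)
    (forall H : {set {set V}}, H \subset E ->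
       ecostB H <= cR * (#|H| * arboricity H * lg).+1%N%:R) ->
    proper_edge_coloring E (Delta + 3 * 2 ^ h)%N
      (arboricity_edge_coloring split base s h E) /\
    costO + oriented_edge_coloring_cost +%R split costS costB mu h E
      <= C * (m * alpha ^ 7 * lg)%N%:R / (2 ^ (7 * h))%N%:R /\
    costO + oriented_edge_coloring_cost +%R split costS ecostB mu h E
      <= C * (m * alpha * lg)%N%:R / (2 ^ h)%N%:R.
Proof.
exists (`|cO| * 2%:R + `|cS| * 3%:R + `|cB| * (6 ^ 7).+1%:R + `|cR| * 7%:R).
move=> V E h s split base costO costS costB ecostB; cbv zeta.
move=> sg hh run hsplit hcS hbase hO hB hR.
set mu := fdo_orientation s in hsplit hcS *.
set m := #|E| in hO *. set alpha := arboricity E in hh *. set lg := trunc_log 2 #|V| in hB hR *.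
rewrite [(7 * h)%N]mulnC expnM.
set N := (2 ^ h)%N.
have splitsub : forall H : {set {set V}}, H \subset E -> split mu H \subset H.
  by move=> H HE; case: (hsplit H HE).
have N1 : (0 < N)%N by rewrite expn_gt0.
have a1 : (N <= alpha)%N := hh.
have n2 : (2 <= #|V|)%N by apply: (@arb_n2 _ E); lia.
have lg1 : (0 < lg)%N by rewrite trunc_log_gt0.
have hlg : (h <= lg)%N.
  apply: trunc_log_max => //; apply: leq_trans hh (arb_le_n sg).
have am : (alpha <= m)%N := arb_le_m E.
have fin : forall v (H : {set {set V}}), H \subset E ->
   [/\ indeg mu H v = (indeg mu (split mu H) v + indeg mu (H :\: split mu H) v)%N,
       (indeg mu (split mu H) v <= indeg mu (H :\: split mu H) v + 1)%N &
       (indeg mu (H :\: split mu H) v <= indeg mu (split mu H) v + 1)%N].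
  move=> v H HE; have [_ hs] := hsplit H HE; have [i1 [i2 [o1 o2]]] := hs v; split => //.
  exact: (card_split_pred (fun e => (v \in e) && ~~ mu e v) (splitsub H HE)).
have fout : forall v (H : {set {set V}}), H \subset E ->
   [/\ outdeg mu H v = (outdeg mu (split mu H) v + outdeg mu (H :\: split mu H) v)%N,
       (outdeg mu (split mu H) v <= outdeg mu (H :\: split mu H) v + 1)%N &
       (outdeg mu (H :\: split mu H) v <= outdeg mu (split mu H) v + 1)%N].
  move=> v H HE; have [_ hs] := hsplit H HE; have [i1 [i2 [o1 o2]]] := hs v; split => //.
  exact: (card_split_pred (fun e => (v \in e) && mu e v) (splitsub H HE)).
have lin : forall L : {set {set V}}, L \in leaves split mu h E -> forall v,
    (N * indeg mu L v + 1 <= indeg mu E v + N)%N.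
  by move=> L LE v; apply: (leaves_gen splitsub (f := fun H => indeg mu H v) (fin v) (subxx E)).
have lout : forall L : {set {set V}}, L \in leaves split mu h E -> forall v,
    (N * outdeg mu L v + 1 <= outdeg mu E v + N)%N.
  by move=> L LE v; apply: (leaves_gen splitsub (f := fun H => outdeg mu H v) (fout v) (subxx E)).
have LsubE : forall L : {set {set V}}, L \in leaves split mu h E -> L \subset E.
  by move=> L LE; apply: (leaves_sub splitsub (subxx E) LE).
have pal : ((oriented_edge_coloring split base mu h E).2 <= maxdeg E + 3 * N)%N.
  rewrite palette_leaves.
  set X := (maxdeg E + 2 * N - 2)%N.
  apply: leq_trans (sum_le_const (c := (X %/ N + 1)%N) _) _.
    move=> L LE; rewrite leq_add2r; apply: maxdeg_le => v; rewrite leq_divRL //.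
    have := lin L LE v; have := lout L LE v; have := leq_maxdeg E v.
    rewrite !(deg_in_out mu) => h1 h2 h3; rewrite /X; nia.
  rewrite size_leaves -/N.
  have := leq_divM X N; rewrite /X; nia.
have col := color_ok splitsub hbase h (subxx E).
split.
  have [c1 c2] := col; rewrite /arboricity_edge_coloring -/mu; split => // e eE.
  have := c1 e eE; move: pal; clear; lia.
have hcS' : forall H : {set {set V}}, H \subset E -> costS mu H <= `|cS| * (#|H|.+1)%:R.
  move=> H HE; apply: le_trans (hcS H HE) _; apply: ler_wpM2r; first exact: ler0n.
  exact: ler_norm.
have hsc := splitcost splitsub (normr_ge0 cS) hcS' h (subxx E).
have hsc' : oriented_edge_coloring_cost +%R split costS (fun _ => 0) mu h E
     <= `|cS| * (h * m + 2 * N)%N%:R.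
  rewrite expnS -/N -/m in hsc; have := normr_ge0 cS; lra.
have arbL : forall L, L \in leaves split mu h E -> (arboricity L * N <= 6 * alpha)%N.
  move=> L LE.
  have hK : forall v, (outdeg mu L v <= (3 * alpha) %/ N)%N.
    move=> v; rewrite leq_divRL //; have := lout L LE v; have := fdo_outdeg sg run v.
    rewrite -/mu -/alpha; nia.
  have tails : forall e, e \in L -> exists v, v \in e /\ mu e v.
    move=> e eL; apply: fdo_tail; have := sg e (subsetP (LsubE L LE) e eL).
    by move=> h2; apply/eqP => e0; move: h2; rewrite e0 cards0.
  have := arb_bound tails hK; have := leq_divM (3 * alpha) N; nia.
have m1 : (1 <= m)%N by lia.
set A7 := (alpha ^ 7)%N. set N7 := (N ^ 7)%N. set D := (6 ^ 7)%N.
have NA7 : (N7 <= A7)%N by rewrite /N7 /A7 leq_exp2r.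
have N71 : (0 < N7)%N by rewrite /N7 expn_gt0 N1.
have PQ : forall L, L \in leaves split mu h E -> (arboricity L ^ 7 * N7 <= D * A7)%N.
  move=> L LE; rewrite /N7 /D /A7 -!expnMn leq_exp2r //; exact: arbL.
clearbody A7 N7 D.
rewrite (cost_leaves split mu costS costB) (cost_leaves split mu costS ecostB).
set sc := oriented_edge_coloring_cost _ _ _ _ _ _ _.
have hsc2 : sc * N7%:R <= `|cS| * (3 * (m * A7 * lg))%N%:R.
  rewrite -(normr_id cS); apply: helperR hsc' _.
  have h1 : (h * m + 2 * N <= 3 * (m * lg))%N by nia.
  have := leq_mul h1 NA7; move: lg1; clear; nia.
have hO2 : costO * N7%:R <= `|cO| * (2 * (m * A7 * lg))%N%:R.
  apply: helperR hO _.
  have := leq_mul (leq_mul (leqnn m) NA7) lg1; move: m1 NA7; clear; nia.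
split.
  rewrite ler_pdivlMr ?ltr0n //.
  set G := (\sum_(L <- leaves split mu h E) (#|L| * arboricity L ^ 7 * lg).+1)%N.
  have hBs : \sum_(L <- leaves split mu h E) costB L <= cB * G%:R.
    rewrite /G natr_sum mulr_sumr big_seq [X in _ <= X]big_seq; apply: ler_sum => L LE.
    exact: hB L (LsubE L LE).
  have hG : (G * N7 <= D.+1 * (m * A7 * lg))%N.
    apply: (@leq_trans (\sum_(L <- leaves split mu h E) (D * A7 * lg * #|L| + A7))%N).
      rewrite /G big_distrl /= big_seq [X in (_ <= X)%N]big_seq; apply: leq_sum => L LE.
      have := leq_mul (leq_mul (leqnn #|L|) (PQ L LE)) (leqnn lg).
      have key : forall P c l N7 A7 D, (N7 <= A7 -> c * (P * N7) * l <= c * (D * A7) * l -> (c * P * l).+1 * N7 <= D * A7 * l * c + A7)%N by move=> *; nia.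
      exact: key.
    rewrite big_split /= -big_distrr /= (sum_card_leaves splitsub h (subxx E)) sum_const_seq size_leaves -/N -/m.
    have := leq_mul (leq_mul a1 (leqnn A7)) lg1.
    have := leq_mul (leq_mul am (leqnn A7)) (leqnn lg).
    clear; nia.
  have hB2 := helperR hBs hG.
  rewrite !natrM in hO2 hsc2 hB2 *.
  have q0 : 0 <= (m%:R * A7%:R * lg%:R : R) by rewrite -!natrM ler0n.
  have r0 : 0 <= `|cR| * 7%:R * (m%:R * A7%:R * lg%:R) :> R.
    by rewrite mulr_ge0 // mulr_ge0 // ler0n.
  set q := (m%:R * A7%:R * lg%:R : R) in q0 r0 hO2 hsc2 hB2 *.
  set SB := \sum_(_ <- _) costB _ in hB2 *.
  rewrite mulrA in hO2; rewrite mulrA in hsc2; rewrite mulrA in hB2.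
  rewrite !mulrDl.
  lra.
rewrite ler_pdivlMr ?ltr0n //.
have hO3 : costO * N%:R <= `|cO| * (2 * (m * alpha * lg))%N%:R.
  apply: helperR hO _.
  have := leq_mul (leq_mul (leqnn m) a1) lg1; move: m1 a1; clear; nia.
have hsc3 : sc * N%:R <= `|cS| * (3 * (m * alpha * lg))%N%:R.
  rewrite -(normr_id cS); apply: helperR hsc' _.
  have h1 : (h * m + 2 * N <= 3 * (m * lg))%N by nia.
  have := leq_mul h1 a1; move: lg1; clear; nia.
set G := (\sum_(L <- leaves split mu h E) (#|L| * arboricity L * lg).+1)%N.
have hRs : \sum_(L <- leaves split mu h E) ecostB L <= cR * G%:R.
  rewrite /G natr_sum mulr_sumr big_seq [X in _ <= X]big_seq; apply: ler_sum => L LE.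
  exact: hR L (LsubE L LE).
have hG : (G * N <= 7 * (m * alpha * lg))%N.
  apply: (@leq_trans (\sum_(L <- leaves split mu h E) (6 * alpha * lg * #|L| + alpha))%N).
    rewrite /G big_distrl /= big_seq [X in (_ <= X)%N]big_seq; apply: leq_sum => L LE.
    have := leq_mul (leq_mul (leqnn #|L|) (arbL L LE)) (leqnn lg).
    have key : forall P c l N A, (N <= A -> c * (P * N) * l <= c * (6 * A) * l -> (c * P * l).+1 * N <= 6 * A * l * c + A)%N by move=> *; nia.
    exact: key.
  rewrite big_split /= -big_distrr /= (sum_card_leaves splitsub h (subxx E)) sum_const_seq size_leaves -/N -/m.
  have := leq_mul (leq_mul a1 (leqnn alpha)) lg1.
  have := leq_mul (leq_mul am (leqnn alpha)) (leqnn lg).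
  clear; nia.
have hR2 := helperR hRs hG.
rewrite !natrM in hO3 hsc3 hR2 *.
have q0 : 0 <= (m%:R * alpha%:R * lg%:R : R) by rewrite -!natrM ler0n.
set q := (m%:R * alpha%:R * lg%:R : R) in q0 hO3 hsc3 hR2 *.
have r0 : 0 <= `|cB| * (D.+1)%:R * q.
  by rewrite mulr_ge0 // mulr_ge0 // ler0n.
set SB := \sum_(_ <- _) ecostB _ in hR2 *.
rewrite mulrA in hO3; rewrite mulrA in hsc3; rewrite mulrA in hR2.
rewrite !mulrDl.
lra.
Qed.
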